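(* Let $G \leq \mathrm{Homeo}(\mathbb{S}^1)$ be a group whose action on $\mathbb{S}^1$ is minimal and not topologically free. Suppose that $G$ acts faithfully on a set $\Omega$ such that for every $\Delta \in \Omega^{\{2\}}$, the action of $G_\Delta$ on $\mathbb{S}^1$ is minimal. Then there exists $\omega \in \Omega$ such that the action of $G_\omega$ on $\mathbb{S}^1$ is not topologically free.
   Context: An action on $\mathbb{S}^1$ is minimal if every orbit is dense, and topologically free if the fixed point set of every non-trivial element has empty interior. $\Omega^{\{2\}}$ is the set of unordered pairs of elements of $\Omega$, $G_\Delta$ the pointwise stabilizer of $\Delta$, and $G_\omega$ the stabilizer of $\omega$. *)

(* Defs.v *)
From HB Require Import structures.
From mathcomp Require Import all_boot all_order all_algebra.
From mathcomp Require Import all_classical all_reals all_analysis.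
Set Implicit Arguments. Unset Strict Implicit. Unset Printing Implicit Defensive.
Import Order.TTheory GRing.Theory Num.Theory.
Import numFieldNormedType.Exports.
Local Open Scope classical_set_scope.
Local Open Scope ring_scope.

(* The unit circle S^1 in R^2 = R * R, with the subspace topology
   (set_type carries the initial topology of the inclusion). *)
Definition circle_set (R : realType) : set (R * R) :=
  [set p | p.1 ^+ 2 + p.2 ^+ 2 = 1].
Definition S1 (R : realType) : topologicalType := set_type (@circle_set R).

Section Generic.
Variable X : topologicalType.

Definition homeomorphism (f : X -> X) : Prop :=
  continuous f /\ exists g : X -> X, [/\ continuous g, cancel f g & cancel g f].

Definition homeo_subgroup (G : set (X -> X)) : Prop :=
  [/\ (forall g, G g -> homeomorphism g),
      G id,
      (forall g h, G g -> G h -> G (g \o h)) &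
      (forall g, G g -> exists h, [/\ G h, cancel g h & cancel h g])].

Definition minimal_action (H : set (X -> X)) : Prop :=
  forall x : X, dense [set h x | h in H].

Definition topologically_free (H : set (X -> X)) : Prop :=
  forall h, H h -> h <> id -> interior [set x | h x = x] = set0.

Definition is_action (Omega : Type) (G : set (X -> X))
    (act : (X -> X) -> Omega -> Omega) : Prop :=
  (forall w, act id w = w) /\
  (forall g h w, G g -> G h -> act (g \o h) w = act g (act h w)).

Definition faithful_action (Omega : Type) (G : set (X -> X))
    (act : (X -> X) -> Omega -> Omega) : Prop :=
  forall g, G g -> (forall w, act g w = w) -> g = id.

Definition stab (Omega : Type) (G : set (X -> X))
    (act : (X -> X) -> Omega -> Omega) (w : Omega) : set (X -> X) :=
  [set g | G g /\ act g w = w].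

Definition pair_stab (Omega : Type) (G : set (X -> X))
    (act : (X -> X) -> Omega -> Omega) (a b : Omega) : set (X -> X) :=
  [set g | [/\ G g, act g a = a & act g b = b]].
End Generic.

(* Main.v *)
Require Import Defs.
From HB Require Import structures.
From mathcomp Require Import all_boot all_order all_algebra.
From mathcomp Require Import all_classical all_reals all_analysis.
From mathcomp Require Import lra.
Set Implicit Arguments. Unset Strict Implicit. Unset Printing Implicit Defensive.
Import Order.TTheory GRing.Theory Num.Theory.
Import numFieldNormedType.Exports.
Local Open Scope classical_set_scope.
Local Open Scope ring_scope.

Section Gen.
Variable X : topologicalType.

Lemma act_inv (Omega : Type) (G : set (X -> X)) act h hi (a : Omega) :
  is_action G act -> G h -> G hi -> cancel h hi -> act h a = a -> act hi a = a.
Proof.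
move=> [H1 H2] Gh Ghi hK ha.
have e : hi \o h = id by apply: funext => x /=; rewrite hK.
by rewrite -{1}ha -H2 // e H1.
Qed.

Lemma main_gen (Hconn : forall U : set X, open U -> closed U -> U !=set0 -> U = setT)
  (G : set (X -> X)) (Omega : Type) (act : (X -> X) -> Omega -> Omega)
  (HG : homeo_subgroup G) (Hntf : ~ topologically_free G)
  (Hact : is_action G act) (Hfaith : faithful_action G act)
  (Hpairs : forall a b : Omega, a <> b -> minimal_action (pair_stab G act a b)) :
  exists w : Omega, ~ topologically_free (stab G act w).
Proof.
case: HG => Ghom Gid Gcomp Ginv.
apply: contrapT => Hne.
have Htf : forall w, topologically_free (stab G act w).
  by move=> w; apply: contrapT => H; apply: Hne; exists w.
have [g [Gg gnid Wne]] : exists g, [/\ G g, g <> id & interior [set x | g x = x] <> set0].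
  apply: contrapT => H; apply: Hntf => g Gg gn; apply: contrapT => Hi; apply: H; by exists g.
set W := interior [set x | g x = x].
have oW : open W by exact: open_interior.
have WF : forall x, W x -> g x = x by move=> x /interior_subset.
have [w gw] : exists w, act g w <> w.
  apply: contrapT => H; apply: gnid; apply: Hfaith => // w; apply: contrapT => Hw; apply: H; by exists w.
set H := pair_stab G act w (act g w).
have Hmin : minimal_action H by apply: Hpairs => e; apply: gw; rewrite -e.
have [gi [Ggi gK giK]] := Ginv g Gg.
have Hinv : forall h, H h -> exists hi, [/\ H hi, cancel h hi & cancel hi h].
  move=> h [Gh h1 h2]; have [hi [Ghi hK hiK]] := Ginv h Gh; exists hi; split => //.
  by split => //; apply: (act_inv Hact Gh Ghi hK).
have cont : forall f, G f -> continuous f by move=> f /Ghom [].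
have claim : forall h, H h -> (exists x, W x /\ W (h x)) -> forall y, W y -> W (h y).
  move=> h Hh [x [Wx Whx]].
  have [hi [[Ghi hi1 hi2] hK hiK]] := Hinv h Hh.
  case: Hh => Gh h1 h2.
  set c := gi \o (h \o (g \o hi)).
  have Gc : G c by apply: (Gcomp) => //; apply: (Gcomp) => //; apply: (Gcomp).
  have cw : act c w = w.
    rewrite /c (proj2 Hact) //; last by apply: (Gcomp) => //; apply: (Gcomp).
    rewrite (proj2 Hact) //; last by apply: (Gcomp).
    rewrite (proj2 Hact) // hi1 h2.
    by rewrite -(proj2 Hact) // (_ : gi \o g = id) ?(proj1 Hact) //; apply: funext => z /=; rewrite gK.
  set V := W `&` (hi @^-1` W).
  have oV : open V by apply: openI => //; apply: open_comp => // z _; apply: (cont).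
  have Vsub : V `<=` [set z | c z = z].
    move=> z [Wz Whz]; rewrite /c /= (WF _ Whz) hiK.
    by rewrite -{1}(WF _ Wz) gK.
  have ceq : c = id.
    apply: contrapT => cn.
    have := Htf w c (conj Gc cw) cn; apply/eqP/set0P.
    exists (h x); apply: filterS Vsub _; apply: open_nbhs_nbhs; split => //.
    by split => //=; rewrite hK.
  have comm : forall z, h (g z) = g (h z).
    move=> z; have := congr1 (fun f => f (h z)) ceq; rewrite /c /= hK => e.
    by rewrite -[in RHS]e giK.
  move=> y Wy; change (nbhs (h y) [set x | g x = x]).
  have : nbhs (h y) (hi @^-1` [set x | g x = x]).
    by apply: (cont _ Ghi (h y)); rewrite hK.
  apply: filterS => z /= e.
  by rewrite -{1}(hiK z) -comm e hiK.
have [p gp] : exists p, g p <> p.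
  apply: contrapT => Hp; apply: gnid; apply: funext => p; apply: contrapT => e; apply: Hp; by exists p.
have WnT : W <> setT.
  by move=> e; apply: gp; apply: WF; rewrite e.
have [b [cb nWb]] : exists b, closure W b /\ ~ W b.
  apply: contrapT => Hb; apply: WnT; apply: Hconn => //; last by apply/set0P/eqP.
  move=> b cb; apply: contrapT => nb; apply: Hb; by exists b.
have W0 : W !=set0 by apply/set0P/eqP.
have [y [Wy [h Hh hby]]] := Hmin b W W0 oW.
subst y.
have [hi [Hhi hK hiK]] := Hinv h Hh.
have Gh : G h by case: Hh.
have nb : nbhs b (h @^-1` W).
  by apply: (cont h Gh b); apply: open_nbhs_nbhs; split.
have [x [Wx Whx]] := cb _ nb.
have c1 := claim h Hh (ex_intro _ x (conj Wx Whx)).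
have c2 : forall y, W y -> W (hi y).
  by apply: claim => //; exists (h x); rewrite hK.
by apply: nWb; rewrite -[b]hK; apply: c2.
Qed.
End Gen.

Lemma S1_conn (R : realType) (U : set (S1 R)) : open U -> closed U -> U !=set0 -> U = setT.
Proof.
move=> oU cU [z0 Uz0].
pose phi (t : R) : S1 R := SigSub (mem_set (cos2Dsin2 t) : (cos t, sin t) \in @circle_set R).
have cphi : continuous phi.
  apply: (@continuous_comp_initial _ _ _ set_val).
  move=> t; apply: (@cvg_pair _ _ _ _ (nbhs (cos t)) (nbhs (sin t))); [exact: continuous_cos | exact: continuous_sin].
have sphi : forall z : S1 R, exists t, phi t = z.
  case=> -[x y] Hm; have Hxy : x ^+ 2 + y ^+ 2 = 1 := set_mem Hm.
  have x1 : -1 <= x <= 1 by apply/andP; split; nra.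
  have ca : cos (acos x) = x by apply: acosK; rewrite in_itv.
  have sa : sin (acos x) = `|y|.
    by rewrite sin_acos // (_ : 1 - x ^+ 2 = y ^+ 2) ?sqrtr_sqr //; lra.
  have [y0|y0] := leP 0 y.
    exists (acos x); apply: val_inj => /=; by rewrite ca sa ger0_norm.
  exists (- acos x); apply: val_inj => /=; by rewrite cosN sinN ca sa ltr0_norm // opprK.
have cR : connected [set: R].
  by apply/connected_intervalP => a b _ _ c _.
have B0 : (phi @^-1` U) !=set0.
  by have [t tz] := sphi z0; exists t; rewrite /preimage /= tz.
have BT := cR _ B0 (ex_intro2 _ _ _ (open_comp (fun x _ => cphi x) oU) (esym (setTI _)))
  (ex_intro2 _ _ _ (closed_comp (fun x _ => cphi x) cU) (esym (setTI _))).
apply/seteqP; split => // z _; have [t <-] := sphi z.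
by have : [set: R] t by []; rewrite -BT.
Qed.

Theorem lemma4p4 (R : realType) (G : set (S1 R -> S1 R)) (Omega : Type)
  (act : (S1 R -> S1 R) -> Omega -> Omega)
  (HG : homeo_subgroup G)
  (Hmin : minimal_action G)
  (Hntf : ~ topologically_free G)
  (Hact : is_action G act)
  (Hfaith : faithful_action G act)
  (Hpairs : forall a b : Omega, a <> b -> minimal_action (pair_stab G act a b)) :
  exists w : Omega, ~ topologically_free (stab G act w).
Proof.
apply: (@main_gen (S1 R)) => //.
move=> U oU cU U0; exact: S1_conn.
Qed.
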